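(* Let $C\subseteq 2^X$ be an ample class and let $C'\subseteq C$ be a subclass whose graph $G(C')$ is connected. Then $C'$ is convex in $C$ if and only if $C'$ is locally convex in $C$.
   Context: A cube of $2^X$ is $\{T\cup Z:Z\subseteq Y\}$ with $Y\subseteq X$, $T\subseteq X\setminus Y$ ($Y$ its support). $Y$ is shattered by $C$ if $\{c\cap Y:c\in C\}=2^Y$; $C$ is ample if every set shattered by $C$ is the support of a cube contained in $C$. $G(C)$ is the graph on $C$ joining $c,c'$ with $|c\Delta c'|=1$. For $c,c'\subseteq X$, $B(c,c')$ is the smallest cube of $2^X$ containing $c$ and $c'$ (the set of $t$ with $c\cap c'\subseteq t\subseteq c\cup c'$). For $C'\subseteq C$: $C'$ is convex in $C$ if $B(c,c')\cap C\subseteq C'$ for all $c,c'\in C'$; $C'$ is locally convex in $C$ if $B(c,c')\cap C\subseteq C'$ for all $c,c'\in C'$ with $|c\Delta c'|=2$. *)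

(* Defs.v *)
From mathcomp Require Import all_boot.
Set Implicit Arguments. Unset Strict Implicit. Unset Printing Implicit Defensive.

Section Ample.
Variable X : finType.

Definition symd (a b : {set X}) : {set X} := (a :\: b) :|: (b :\: a).

Definition cube (T Y : {set X}) : {set {set X}} := [set T :|: Z | Z in powerset Y].

Definition has_cube_with_support (C : {set {set X}}) (Y : {set X}) : Prop :=
  exists T : {set X}, T \subset ~: Y /\ cube T Y \subset C.

Definition shattered (C : {set {set X}}) (Y : {set X}) : Prop :=
  [set c :&: Y | c in C] = powerset Y.

Definition ample (C : {set {set X}}) : Prop :=
  forall Y : {set X}, shattered C Y -> has_cube_with_support C Y.

(* B(c,c') : smallest cube containing c and c' *)
Definition Bcube (c c' : {set X}) : {set {set X}} :=
  [set t : {set X} | (c :&: c' \subset t) && (t \subset c :|: c')].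

Definition convex_in (C' C : {set {set X}}) : Prop :=
  forall c c', c \in C' -> c' \in C' -> Bcube c c' :&: C \subset C'.

Definition locally_convex_in (C' C : {set {set X}}) : Prop :=
  forall c c', c \in C' -> c' \in C' -> #|symd c c'| = 2 ->
    Bcube c c' :&: C \subset C'.

Definition adjG (a b : {set X}) : bool := #|symd a b| == 1.

Definition graph_connected (C' : {set {set X}}) : Prop :=
  forall c c', c \in C' -> c' \in C' ->
    exists p : seq {set X},
      [/\ path adjG c p, all (fun v => v \in C') p & last c p = c'].

End Ample.

(* Main.v *)
Require Import Defs.
From mathcomp Require Import all_boot zify.
Set Implicit Arguments. Unset Strict Implicit. Unset Printing Implicit Defensive.

Definition tog {X : finType} (a : {set X}) (e : X) := symd a [set e].

Lemma in_symd {X : finType} (a b : {set X}) i : (i \in symd a b) = (i \in a) (+) (i \in b).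
Proof. by rewrite /symd !inE; case: (i \in a); case: (i \in b). Qed.

Lemma in_tog {X : finType} (a : {set X}) e i : (i \in tog a e) = (i \in a) (+) (i == e).
Proof. by rewrite /tog in_symd inE. Qed.

Lemma symdC {X : finType} (a b : {set X}) : symd a b = symd b a.
Proof. by apply/setP=> i; rewrite !in_symd addbC. Qed.

Lemma symdK {X : finType} (a b : {set X}) : symd a (symd a b) = b.
Proof. by apply/setP=> i; rewrite !in_symd addKb. Qed.

Lemma symd_tog {X : finType} (a : {set X}) e : symd a (tog a e) = [set e].
Proof. by rewrite /tog symdK. Qed.

Lemma togK {X : finType} (a : {set X}) e : tog (tog a e) e = a.
Proof. by apply/setP=> i; rewrite !in_tog -addbA addbb addbF. Qed.

Lemma adjGP {X : finType} (a b : {set X}) : reflect (exists e, b = tog a e) (adjG a b).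
Proof.
apply: (iffP idP).
  by rewrite /adjG => /cards1P[e He]; exists e; rewrite /tog -He symdK.
by case=> e ->; rewrite /adjG symd_tog cards1.
Qed.

Lemma adjG_sym {X : finType} (a b : {set X}) : adjG a b = adjG b a.
Proof. by rewrite /adjG symdC. Qed.

Lemma inBP {X : finType} (a b t : {set X}) :
  reflect (forall i, (i \in a) = (i \in b) -> (i \in t) = (i \in a)) (t \in Bcube a b).
Proof.
rewrite /Bcube inE; apply: (iffP andP).
  case=> /subsetP H1 /subsetP H2 i Hab.
  case Ha: (i \in a); move: Hab; rewrite Ha => Hb.
    by apply: H1; rewrite inE Ha -Hb.
  by apply/negbTE/negP => /H2; rewrite inE Ha -Hb.
move=> H; split; apply/subsetP=> i; rewrite !inE.
  by case/andP=> Ha Hb; rewrite H Ha // Hb.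
case Ha: (i \in a) => //=; case Hb: (i \in b) => //= Ht.
by rewrite H Ha ?Hb // in Ht.
Qed.

Lemma BcubeC {X : finType} (a b : {set X}) : Bcube a b = Bcube b a.
Proof. by rewrite /Bcube setIC setUC. Qed.

Lemma Bcube_symd {X : finType} (a b t : {set X}) :
  (t \in Bcube a b) = (symd a t \subset symd a b).
Proof.
apply/inBP/subsetP.
  move=> H i; rewrite !in_symd; case Ha: (i \in a); case Hb: (i \in b) => //=.
    by rewrite H Ha ?Hb.
  by rewrite H Ha ?Hb.
move=> H i Hab; apply/eqP; move: (H i); rewrite !in_symd Hab.
by case: (i \in t); case: (i \in b) => //= ->.
Qed.

Lemma cards_symd_tog {X : finType} (a b : {set X}) e :
  e \in symd a b -> #|symd (tog a e) b| = #|symd a b|.-1.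
Proof.
move=> He; rewrite (cardsD1 e (symd a b)) He add1n /=.
have -> : symd (tog a e) b = symd a b :\ e.
  apply/setP=> i; rewrite in_setD1 !in_symd inE.
  case: (eqVneq i e) => [->|] /=; last by rewrite addbF.
  by move: He; rewrite in_symd; case: (e \in a); case: (e \in b).
by [].
Qed.

Lemma shatteredP {X : finType} (C : {set {set X}}) Y :
  shattered C Y <-> forall S : {set X}, S \subset Y -> exists2 c, c \in C & c :&: Y = S.
Proof.
split.
  move=> H S SY; have : S \in powerset Y by rewrite powersetE.
  by rewrite -H => /imsetP[c cC ->]; exists c.
move=> H; apply/setP=> S; apply/imsetP/idP.
  by case=> c _ ->; rewrite powersetE subsetIr.
by rewrite powersetE => /H[c cC <-]; exists c.
Qed.

Lemma cube_subP {X : finType} (C : {set {set X}}) T Y :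
  cube T Y \subset C <-> forall Z : {set X}, Z \subset Y -> T :|: Z \in C.
Proof.
split.
  by move=> /subsetP H Z ZY; apply: H; apply/imsetP; exists Z; rewrite ?powersetE.
move=> H; apply/subsetP=> c /imsetP[Z]; rewrite powersetE => ZY ->; exact: H.
Qed.

Lemma noe_shatter {X : finType} (F : {set {set X}}) Y e v :
  (forall c, c \in F -> (e \in c) = v) -> shattered F Y -> e \notin Y.
Proof.
move=> Hv /shatteredP H; apply/negP => eY.
have [c1 c1F c1Y] := H Y (subxx Y).
have [c0 c0F c0Y] := H set0 (sub0set Y).
have h1 : e \in c1 by move/setP: c1Y => /(_ e); rewrite inE eY andbT.
have h0 : e \notin c0 by move/setP: c0Y => /(_ e); rewrite inE eY andbT inE => ->.
by move: (Hv _ c1F) (Hv _ c0F); rewrite h1 (negbTE h0) => <-.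
Qed.

Lemma shattered_sub {X : finType} (F C : {set {set X}}) Y :
  F \subset C -> shattered F Y -> shattered C Y.
Proof.
move=> /subsetP FC /shatteredP H; apply/shatteredP => S /H[c /FC cC <-].
by exists c.
Qed.

Lemma tog_notin {X : finType} (A : {set X}) e : e \notin A -> tog A e = e |: A.
Proof.
move=> eA; apply/setP=> i; rewrite in_tog !inE.
by case: (eqVneq i e) => [->|] /=; rewrite ?(negbTE eA) ?addbF.
Qed.

Lemma tog_in {X : finType} (A : {set X}) e : e \notin A -> tog (e |: A) e = A.
Proof. by move=> eA; rewrite -tog_notin // togK. Qed.

Lemma cube_e {X : finType} (C : {set {set X}}) (T Y : {set X}) e :
  T \subset ~: (e |: Y) -> cube T (e |: Y) \subset C ->
  forall Z : {set X}, Z \subset Y -> [/\ T :|: Z \in C, e |: (T :|: Z) \in C & e \notin T].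
Proof.
move=> TY /cube_subP H Z ZY; split.
- by apply: H; apply: (subset_trans ZY); apply: subsetUr.
- by rewrite setUCA; apply: H; rewrite setUS.
- by move/subsetP: TY => /(_ e) TY; apply/negP => /TY; rewrite !inE eqxx.
Qed.

Lemma ample_fiber {X : finType} (C : {set {set X}}) e v :
  ample C -> ample [set c in C | (e \in c) == v].
Proof.
move=> amp Y shF.
have eY : e \notin Y by apply: (noe_shatter (v := v)) shF => c; rewrite inE => /andP[_ /eqP].
have shC : shattered C Y by apply: shattered_sub shF; apply/subsetP => c; rewrite inE => /andP[].
have [T [TY cT]] := amp Y shC.
case: (boolP ((e \in T) == v)) => eT.
  exists T; split => //; apply/cube_subP => Z ZY; rewrite inE.
  move/cube_subP: cT => -> //=; rewrite inE.
  have -> : (e \in Z) = false by apply/negbTE/negP => /(subsetP ZY); apply/negP.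
  by rewrite orbF.
have shC2 : shattered C (e |: Y).
  apply/shatteredP => S SY.
  have SeY : S :\ e \subset Y.
    apply/subsetP => i; rewrite inE => /andP[ie /(subsetP SY)]; rewrite inE.
    by rewrite (negbTE ie).
  case: (boolP ((e \in S) == v)) => eS.
    move/shatteredP: shF => /(_ _ SeY) [c]; rewrite inE => /andP[cC /eqP ce] cY.
    exists c => //; apply/setP => i; move/setP: cY => /(_ i); rewrite !inE.
    case: (eqVneq i e) => [->|ie] /=; first by rewrite ce (eqP eS) andbT.
    by move=> ->.
  exists (T :|: S :\ e); first by move/cube_subP: cT; apply.
  apply/setP => i; rewrite !inE.
  case: (eqVneq i e) => [->|ie] /=.
    by move: eT eS; case: (e \in T); case: (e \in S); case: (v : bool).
  move/subsetP: TY => /(_ i); rewrite inE => TYi.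
  case iY: (i \in Y); first by rewrite andbT; case iT: (i \in T) => //; move: (TYi iT); rewrite iY.
  rewrite andbF; apply/esym/negbTE/negP => /(subsetP SY); rewrite !inE (negbTE ie) iY.
  by [].
have [T' [TY' cT']] := amp _ shC2.
exists (if v then e |: T' else T'); split.
  apply/subsetP => i iT; move/subsetP: TY' => /(_ i); rewrite !inE negb_or => H.
  move: iT; case: ifP => _; last by move/H => /andP[].
  by rewrite in_setU1 => /orP [/eqP->| /H /andP[] //].
apply/cube_subP => Z ZY; have [h1 h2 h3] := cube_e TY' cT' ZY.
have eZ : e \notin Z by apply/negP => /(subsetP ZY); apply/negP.
rewrite inE; case: ifP => vv.
  by rewrite -setUA h2 !inE eqxx.
by rewrite h1 !inE (negbTE h3) (negbTE eZ).
Qed.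

Lemma ample_red {X : finType} (C : {set {set X}}) e (v : bool) :
  ample C -> ample [set c in C | ((e \in c) == v) && (tog c e \in C)].
Proof.
move=> amp Y shR.
have eY : e \notin Y.
  by apply: (noe_shatter (v := v)) shR => c; rewrite inE => /andP[_ /andP[/eqP ->]].
have shC2 : shattered C (e |: Y).
  apply/shatteredP => S SY.
  have SeY : S :\ e \subset Y.
    apply/subsetP => i; rewrite inE => /andP[ie /(subsetP SY)]; rewrite inE.
    by rewrite (negbTE ie).
  move/shatteredP: shR => /(_ _ SeY) [r]; rewrite inE => /andP[rC /andP[/eqP re rtC]] rY.
  exists (if (e \in S) == v then r else tog r e); first by case: ifP.
  apply/setP => i; move/setP: rY => /(_ i); rewrite !inE.
  case: (eqVneq i e) => [->|ie] /=.
    move=> _; case: ifP => [/eqP eSv|]; first by rewrite re andbT eSv.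
    by rewrite in_tog eqxx re andbT; case: (e \in S); case: (v).
  have -> : (i \in if (e \in S) == v then r else tog r e) = (i \in r).
    by case: ifP => // _; rewrite in_tog (negbTE ie) addbF.
  by move=> ->.
have [T' [TY' cT']] := amp _ shC2.
exists (if v then e |: T' else T'); split.
  apply/subsetP => i iT; move/subsetP: TY' => /(_ i); rewrite !inE negb_or => H.
  move: iT; case: ifP => _; last by move/H => /andP[].
  by rewrite in_setU1 => /orP [/eqP->| /H /andP[] //].
apply/cube_subP => Z ZY; have [h1 h2 h3] := cube_e TY' cT' ZY.
have eZ : e \notin Z by apply/negP => /(subsetP ZY); apply/negP.
have eTZ : e \notin T' :|: Z by rewrite inE negb_or h3.
rewrite inE; case: ifP => vv.
  by rewrite -setUA h2 tog_in // h1 !inE eqxx.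
by rewrite h1 tog_notin // h2 !inE (negbTE h3) (negbTE eZ).
Qed.

Lemma ample_proj {X : finType} (C : {set {set X}}) e :
  ample C -> ample [set c :\ e | c in C].
Proof.
move=> amp Y shP.
have eY : e \notin Y.
  apply/negP => eY; move/shatteredP: shP => /(_ Y (subxx Y)) [p /imsetP[c _ ->]].
  by move/setP => /(_ e); rewrite !inE eqxx eY.
have shC : shattered C Y.
  apply/shatteredP => S; move/shatteredP: shP => shP /shP [p /imsetP[c cC ->] <-].
  exists c => //; apply/setP => i; rewrite !inE.
  by case: (eqVneq i e) => [->|] //=; rewrite (negbTE eY) !andbF.
have [T [TY cT]] := amp Y shC.
exists (T :\ e); split.
  by apply: subset_trans TY; apply: subsetDl.
apply/cube_subP => Z ZY; apply/imsetP; exists (T :|: Z); first by move/cube_subP: cT; apply.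
apply/setP => i; rewrite !inE; case: (eqVneq i e) => [->|] //=.
have eZ : e \notin Z by apply/negP => /(subsetP ZY); apply/negP.
by rewrite (negbTE eZ).
Qed.

Lemma eqIP {X : finType} (c a W : {set X}) :
  reflect (forall i, i \in W -> (i \in c) = (i \in a)) (c :&: W == a :&: W).
Proof.
apply: (iffP eqP).
  by move=> /setP H i iW; move: (H i); rewrite !inE iW !andbT.
by move=> H; apply/setP => i; rewrite !inE; case iW: (i \in W); rewrite ?andbF // !andbT H.
Qed.

Lemma ample_fibW {X : finType} (C : {set {set X}}) (a : {set X}) n :
  ample C -> forall W : {set X}, #|W| = n -> ample [set c in C | c :&: W == a :&: W].
Proof.
move=> amp; elim: n => [|n IH] W.
  move/cards0_eq => ->.
  have -> : [set c in C | c :&: set0 == a :&: set0] = C.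
    by apply/setP => c; rewrite inE !setI0 eqxx andbT.
  by [].
move=> Wn; have : 0 < #|W| by rewrite Wn.
case/card_gt0P => e eW.
have W' : #|W :\ e| = n by move: Wn; rewrite (cardsD1 e) eW add1n => -[].
have -> : [set c in C | c :&: W == a :&: W] =
   [set c in [set c in C | c :&: (W :\ e) == a :&: (W :\ e)] | (e \in c) == (e \in a)].
  apply/setP => c; rewrite !inE -andbA; congr (_ && _).
  apply/eqIP/andP.
    move=> H; split; last by rewrite H.
    by apply/eqIP => i; rewrite inE => /andP[_ /H].
  case=> /eqIP H /eqP He i iW; case: (eqVneq i e) => [->|ie] //.
  by apply: H; rewrite !inE ie.
by apply: ample_fiber; apply: IH.
Qed.

Lemma ample_Bcube {X : finType} (C : {set {set X}}) (a b : {set X}) :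
  ample C -> ample (Bcube a b :&: C).
Proof.
move=> amp.
have -> : Bcube a b :&: C = [set c in C | c :&: ~: symd a b == a :&: ~: symd a b].
  apply/setP => t; rewrite in_setI [RHS]inE andbC; congr (_ && _).
  apply/inBP/eqIP => H i.
    by rewrite in_setC in_symd => Hi; apply: H; move: Hi; case: (i \in a); case: (i \in b).
  by move=> Hab; apply: H; rewrite in_setC in_symd Hab addbb.
exact: (ample_fibW amp (erefl _)).
Qed.

Lemma symd0 {X : finType} (a : {set X}) : symd a set0 = a.
Proof. by apply/setP => i; rewrite in_symd inE addbF. Qed.

Lemma symd_eq {X : finType} (a c : {set X}) f :
  symd a c = [set f] -> c = tog a f.
Proof. by move=> H; rewrite /tog -H symdK. Qed.

Lemma Klem {X : finType} n : forall (C : {set {set X}}) a b, ample C -> a \in C -> b \in C ->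
  0 < #|symd a b| <= n -> exists2 e, e \in symd a b & tog a e \in C.
Proof.
elim: n => [|n IH] C a b amp aC bC; first by rewrite ltnNge andNb.
case/andP => H0 Hn.
case: (ltngtP #|symd a b| 2) => H2.
-
  have : #|symd a b| == 1 by rewrite eqn_leq -ltnS H2 H0.
  case/cards1P => e He; exists e; first by rewrite He inE.
  by rewrite -(symd_eq He).
-
  have : 0 < #|symd a b| by [].
  case/card_gt0P => e eS.
  pose P := [set c :\ e | c in C].
  have ampP : ample P by apply: ample_proj.
  have hS : symd (a :\ e) (b :\ e) = symd a b :\ e.
    apply/setP => i; rewrite in_setD1 !in_symd !in_setD1.
    by case: (eqVneq i e).
  have hc : #|symd (a :\ e) (b :\ e)| = #|symd a b|.-1.
    by rewrite hS (cardsD1 e (symd a b)) eS add1n.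
  have [g gS] : exists2 g, g \in symd (a :\ e) (b :\ e) & tog (a :\ e) g \in P.
    apply: IH => //; [by apply/imsetP; exists a|by apply/imsetP; exists b|].
    by rewrite hc; move: H2 Hn; lia.
  case/imsetP => c cC Hc.
  move: gS; rewrite hS in_setD1 => /andP[ge gS].
  have sub : symd a c \subset [set g; e].
    apply/subsetP => i; rewrite in_symd !inE.
    case: (eqVneq i e) => [->|ie]; first by rewrite orbT.
    move/setP: Hc => /(_ i); rewrite in_tog !in_setD1 ie /=.
    by move=> <-; case: (i \in a); case: (eqVneq i g).
  have gin : g \in symd a c.
    move/setP: Hc => /(_ g); rewrite in_tog !in_setD1 ge eqxx /= in_symd => <-.
    by case: (g \in a).
  have [h hSc hC] : exists2 h, h \in symd a c & tog a h \in C.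
    apply: IH => //; apply/andP; split; first by apply/card_gt0P; exists g.
    apply: leq_trans (subset_leq_card sub) _; rewrite cards2.
    by apply: leq_trans (_ : 2 <= n); [case: (g != e)| rewrite -ltnS (leq_trans H2 Hn)].
  exists h => //; move/subsetP: sub => /(_ h hSc); rewrite in_set2.
  by case/orP => /eqP ->.
-
  move/eqP: H2 => /cards2P [e [f [ef Hef]]].
  have ampD : ample (Bcube a b :&: C) by apply: ample_Bcube.
  have eab : e \in symd a b by rewrite Hef !inE eqxx.
  have fab : f \in symd a b by rewrite Hef !inE eqxx orbT.
  have sh : shattered (Bcube a b :&: C) [set e].
    apply/shatteredP => S; rewrite subset1 => HS.
    exists (if (e \in a) == (e \in S) then a else b).
      by case: ifP => _; rewrite in_setI ?aC ?bC andbT; apply/inBP => //; move=> i ->.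
    apply/setP => i; rewrite !inE.
    case: (eqVneq i e) => [->|ie]; rewrite ?andbT ?andbF.
      case: ifP => [/eqP //|]; move: eab; rewrite in_symd.
      by case: (e \in a); case: (e \in b); case: (e \in S).
    by case/orP: HS => /eqP ->; rewrite !inE ?(negbTE ie).
  have [T [TY /cube_subP cT]] := ampD _ sh.
  have eT : e \notin T by move/subsetP: TY => /(_ e); rewrite !inE eqxx; case: (e \in T) => // ->.
  have T1 : T \in Bcube a b :&: C by rewrite -(setU0 T); apply: cT; apply: sub0set.
  have T2 : tog T e \in Bcube a b :&: C by rewrite tog_notin // setUC; apply: cT.
  pose s0 := if (e \in T) == (e \in a) then T else tog T e.
  have s0D : s0 \in Bcube a b :&: C by rewrite /s0; case: ifP.
  have s1D : tog s0 e \in Bcube a b :&: C by rewrite /s0; case: ifP; rewrite ?togK.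
  have es0 : e \notin symd a s0.
    rewrite in_symd /s0; case: ifP => [/eqP ->|]; first by rewrite addbb.
    by rewrite in_tog eqxx; case: (e \in a); case: (e \in T).
  have sub : symd a s0 \subset [set f].
    apply/subsetP => i Hi; move: s0D; rewrite in_setI Bcube_symd Hef => /andP[/subsetP /(_ i Hi)].
    rewrite !inE => /orP[/eqP ie|//]; by move: es0; rewrite -ie Hi.
  move: sub; rewrite subset1 => /orP[/eqP Hf|/eqP H0'].
    by exists f => //; rewrite -(symd_eq Hf); move: s0D; rewrite inE => /andP[].
  exists e => //.
  have -> : a = s0 by rewrite -(symdK a s0) H0' symd0.
  by move: s1D; rewrite inE => /andP[].
Qed.

Definition sadj {X : finType} (S : {set {set X}}) : rel {set X} :=
  fun a b => (a \in S) && (b \in S) && adjG a b.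

Lemma sadj_sym {X : finType} (S : {set {set X}}) : symmetric (sadj S).
Proof. by move=> a b; rewrite /sadj adjG_sym (andbC (a \in S)). Qed.

Lemma conn_mono {X : finType} (S S' : {set {set X}}) a b :
  S \subset S' -> connect (sadj S) a b -> connect (sadj S') a b.
Proof.
move=> /subsetP H; apply: connect_sub => x y /andP[/andP[xS yS] xy].
by apply: connect1; rewrite /sadj xy !H.
Qed.

Lemma Bcube_tog_sub {X : finType} (a b : {set X}) e :
  e \in symd a b -> Bcube (tog a e) b \subset Bcube a b.
Proof.
move=> eS; apply/subsetP => t /inBP H; apply/inBP => i Hab.
have ie : i != e by apply/negP => /eqP ie; move: eS; rewrite in_symd -ie Hab addbb.
by rewrite H in_tog (negbTE ie) addbF.
Qed.

Lemma tog_in_Bcube {X : finType} (a b : {set X}) e :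
  e \in symd a b -> tog a e \in Bcube a b.
Proof.
move=> eS; apply/inBP => i Hab.
have ie : i != e by apply/negP => /eqP ie; move: eS; rewrite in_symd -ie Hab addbb.
by rewrite in_tog (negbTE ie) addbF.
Qed.

Lemma Bcube_refl {X : finType} (a b : {set X}) : a \in Bcube a b.
Proof. by apply/inBP. Qed.

Lemma Conn {X : finType} n : forall (C : {set {set X}}) a b, ample C -> a \in C -> b \in C ->
  #|symd a b| <= n -> connect (sadj (Bcube a b :&: C)) a b.
Proof.
elim: n => [|n IH] C a b amp aC bC Hn.
  have : symd a b = set0 by apply: cards0_eq; move: Hn; rewrite leqn0 => /eqP.
  by move=> H; rewrite -(symdK a b) H symd0 connect0.
case: (eqVneq a b) => [->|ab]; first exact: connect0.
have H0 : 0 < #|symd a b|.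
  apply/card_gt0P/set0Pn/eqP => H; move: ab; rewrite -{1}(symdK a b) H symd0.
  by rewrite eqxx.
have [e eS eC] := Klem amp aC bC (n := n.+1) (introT andP (conj H0 Hn)).
apply: (@connect_trans _ _ (tog a e)).
  apply: connect1; rewrite /sadj !in_setI aC eC Bcube_refl tog_in_Bcube //=.
  by apply/adjGP; exists e.
apply: conn_mono (IH _ _ _ amp eC bC _).
  by apply: setSI; apply: Bcube_tog_sub.
by rewrite cards_symd_tog // -ltnS prednK.
Qed.

Definition varying {X : finType} (C : {set {set X}}) : {set X} :=
  [set i | [exists c in C, i \in c] && [exists c in C, i \notin c]].

Lemma vary_fiber {X : finType} (C : {set {set X}}) e (v : bool) x :
  x \in C -> tog x e \in C -> #|varying [set c in C | (e \in c) == v]| < #|varying C|.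
Proof.
move=> xC txC; apply: proper_card; apply/properP; split.
  apply/subsetP => i; rewrite !inE => /andP[/existsP[c /andP[cF ic]] /existsP[d /andP[dF id]]].
  move: cF dF; rewrite !inE => /andP[cC _] /andP[dC _].
  by apply/andP; split; apply/existsP; [exists c|exists d]; rewrite ?cC ?dC.
exists e.
  rewrite inE; case ex: (e \in x).
    by apply/andP; split; apply/existsP; [exists x|exists (tog x e)]; rewrite ?xC ?txC ?in_tog ?ex ?eqxx.
  by apply/andP; split; apply/existsP; [exists (tog x e)|exists x]; rewrite ?xC ?txC ?in_tog ?ex ?eqxx.
rewrite inE negb_and; apply/orP; case: v; [right|left]; rewrite negb_exists;
  apply/forallP => c; rewrite inE; case: (e \in c); rewrite ?andbF ?andbT //.
Qed.

Lemma tog_tog_symd {X : finType} (s : {set X}) e g :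
  e != g -> #|symd (tog s e) (tog s g)| = 2.
Proof.
move=> eg; have -> : symd (tog s e) (tog s g) = [set e; g].
  apply/setP => i; rewrite in_symd !in_tog !inE.
  by case: (i \in s); case: (eqVneq i e) => [->|]; rewrite ?(negbTE eg) //=; case: (i == g).
by rewrite cards2 eg.
Qed.

Lemma path_sadj {X : finType} (S : {set {set X}}) (p : seq {set X}) c :
  c \in S -> path (@adjG X) c p -> all (fun v => v \in S) p -> path (sadj S) c p.
Proof.
elim: p c => [//|y p IH] c cS /= /andP[cy py] /andP[yS pS].
by rewrite /sadj cS yS cy /=; apply: IH.
Qed.

Lemma mainlem {X : finType} n : forall (C C' : {set {set X}}),
  #|varying C| < n -> ample C -> C' \subset C -> locally_convex_in C' C ->
  forall c c', c \in C' -> connect (sadj C') c c' -> Bcube c c' :&: C \subset C'.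
Proof.
elim: n => [//|n IH] C C' Hv amp sub lc.
have subP := subsetP sub.
have csym : connect_sym (sadj C') by apply: sym_connect_sym; apply: sadj_sym.
have ClaimN : forall e x u, x \in C' -> tog x e \in C -> u \in C' -> tog u e \in C' ->
    connect (sadj C') x u -> tog x e \in C'.
  move=> e x u xC' txC uC' tuC' /connectP [p pp uE]; rewrite uE in tuC'; clear uE uC' u.
  have [v xv0] : exists v, (e \in x) = v by exists (e \in x).
  set F := [set c in C | (e \in c) == v].
  have [q [qC' tqC' qv xq]] : exists q, [/\ q \in C', tog q e \in C', (e \in q) = v &
      connect (sadj (C' :&: F)) x q].
    move: xv0; elim: p x xC' pp tuC' {txC} => [|y p IHp] x' xC' /= pp tl xv.
      by exists x'; split => //; apply: connect0.
    case/andP: pp => /andP[/andP[_ yC'] /adjGP[g yE]] pp; subst y.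
    case: (eqVneq g e) => [ge|ge].
      by exists x'; split => //; rewrite -ge.
    have yv : (e \in tog x' g) = v by rewrite in_tog eq_sym (negbTE ge) addbF.
    have [q [qC' tqC' qv yq]] := IHp _ yC' pp tl yv.
    exists q; split => //; apply: (@connect_trans _ _ (tog x' g)) yq.
    have x'F : x' \in C' :&: F by rewrite in_setI xC' in_set subP // xv eqxx.
    have yF : tog x' g \in C' :&: F by rewrite in_setI yC' in_set subP // yv eqxx.
    by apply: connect1; rewrite /sadj x'F yF; apply/adjGP; exists g.
  have ampF : ample F by apply: ample_fiber.
  have xC := subP _ xC'.
  have HvF : #|varying F| < n.
    by apply: leq_trans (vary_fiber v xC txC) _; rewrite -ltnS.
  have subF : C' :&: F \subset F by apply: subsetIr.
  have lcF : locally_convex_in (C' :&: F) F.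
    move=> a b; rewrite !in_setI => /andP[aC' _] /andP[bC' _] ab2.
    apply/subsetP => t; rewrite !in_setI => /andP[tB tF].
    rewrite tF andbT; move/subsetP: (lc a b aC' bC' ab2); apply.
    by rewrite in_setI tB; move: tF; rewrite in_set => /andP[].
  have xCF : x \in C' :&: F by rewrite in_setI xC' in_set xC xv0 eqxx.
  have HB := IH _ _ HvF ampF subF lcF x q xCF xq.
  pose R := [set c in C | ((e \in c) == v) && (tog c e \in C)].
  have ampR : ample R by apply: ample_red.
  have xR : x \in R by rewrite in_set xC xv0 eqxx txC.
  have qR : q \in R by rewrite in_set subP // qv eqxx subP.
  have := Conn ampR qR xR (leqnn #|symd q x|).
  case/connectP => p0 pp0 ->.
  have Hgen : forall p0 s, tog s e \in C' -> s \in R ->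
      path (sadj (Bcube q x :&: R)) s p0 -> tog (last s p0) e \in C'.
    elim => [//|y p1 IHp] s tsC sR /=.
    case/andP => /andP[/andP[_ yBR] /adjGP[g yE]] pp1; subst y.
    move: yBR; rewrite in_setI => /andP[yB yR].
    apply: IHp => //; move: yR; rewrite in_set => /andP[yC /andP[/eqP yv tyC]].
    move: sR; rewrite in_set => /andP[sC /andP[/eqP sv _]].
    have ge : e != g.
      apply/negP => /eqP ge; move: yv; rewrite -ge in_tog eqxx sv; by case: (v).
    have yC' : tog s g \in C'.
      have : tog s g \in C' :&: F.
        by move/subsetP: HB; apply; rewrite in_setI BcubeC yB in_set yC yv eqxx.
      by rewrite in_setI => /andP[].
    move/subsetP: (lc _ _ tsC yC' (tog_tog_symd s ge)); apply.
    rewrite in_setI tyC andbT; apply/inBP => i; rewrite !in_tog.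
    by case: (i \in s); case: (eqVneq i e) => [->|]; rewrite ?(negbTE ge) //=; case: (i == g).
  exact: Hgen p0 q tqC' qR pp0.
move=> c c' cC' cc'.
have parity : forall h, h \in symd c c' -> exists u, [/\ u \in C', tog u h \in C' & connect (sadj C') c u].
  move=> h; case/connectP: cc' => p pp ->.
  elim: p c cC' pp => [|y p IHp] c0 c0C' /=; first by rewrite in_symd addbb.
  case/andP => /andP[/andP[_ yC'] /adjGP[g yE]] pp; subst y => hS.
  case: (eqVneq g h) => [gh|gh].
    by exists c0; split => //; rewrite -gh.
  have hS' : h \in symd (tog c0 g) (last (tog c0 g) p).
    by move: hS; rewrite !in_symd in_set1 eq_sym (negbTE gh) addbF.
  have [u [uC' tuC' cu]] := IHp _ yC' pp hS'.
  exists u; split => //; apply: (@connect_trans _ _ (tog c0 g)) cu.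
  by apply: connect1; rewrite /sadj c0C' yC'; apply/adjGP; exists g.
apply/subsetP => t; rewrite in_setI => /andP[tB tC].
have cC := subP _ cC'.
have := Conn amp cC tC (leqnn #|symd c t|).
case/connectP => p pp ->.
have Hgen : forall p w, w \in C' -> w \in Bcube c t -> connect (sadj C') c w ->
    path (sadj (Bcube c t :&: C)) w p -> last w p \in C'.
  elim => [//|y p1 IHp] w wC' wB cw /=.
  case/andP => /andP[/andP[_ yBC] /adjGP[g yE]] pp1; subst y.
  move: yBC; rewrite in_setI => /andP[yB yC].
  have gS : g \in symd c c'.
    have : (g \in c) != (g \in c') -> g \in symd c c' by rewrite in_symd; case: (g \in c); case: (g \in c').
    apply; apply/negP => /eqP cg.
    have ct : (g \in c) = (g \in t).
      move/inBP: tB => /(_ g cg) ->; by [].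
    move/inBP: wB => /(_ g ct) wg; move/inBP: yB => /(_ g ct).
    by rewrite in_tog eqxx wg; case: (g \in c).
  have [u [uC' tuC' cu]] := parity g gS.
  have yC' : tog w g \in C'.
    apply: (ClaimN g w u) => //.
    by apply: (@connect_trans _ _ c) cu; rewrite csym.
  apply: IHp => //.
  apply: (@connect_trans _ _ w) cw _.
  by apply: connect1; rewrite /sadj wC' yC'; apply/adjGP; exists g.
exact: Hgen p c cC' (Bcube_refl c t) (connect0 _ _) pp.
Qed.

Theorem lemma4p8 (X : finType) (C C' : {set {set X}}) :
  ample C -> C' \subset C -> graph_connected C' ->
  (convex_in C' C <-> locally_convex_in C' C).
Proof.
move=> amp sub gc; split.
  by move=> cv c c' cC c'C _; apply: cv.
move=> lc c c' cC c'C.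
have [p [pp pall pl]] := gc c c' cC c'C.
apply: (mainlem (n := #|varying C|.+1)) => //.
by apply/connectP; exists p => //; apply: path_sadj.
Qed.
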